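(* Let $f\colon X\to X$ be a cw-expansive homeomorphism of a compact metric space $X$. Then there are $\delta>0$ and a continuous function $\mathcal L\colon\mathcal C_\delta(X)\to\mathbb{R}$ such that: 1. $\mathcal L(A)\ge0$ for all $A\in\mathcal C_\delta(X)$, with equality if and only if $A$ is a singleton; 2. $\mathcal L(f(A))-2\mathcal L(A)+\mathcal L(f^{-1}(A))=\mathcal L(A)$ whenever $f(A),A,f^{-1}(A)\in\mathcal C_\delta(X)$.
   Context: A continuum is a nonempty compact connected set. $\mathcal C(X)$ is the space of subcontinua of $X$ with the Hausdorff distance, and $\mathcal C_\delta(X)=\{A\in\mathcal C(X):\operatorname{diam}A\le\delta\}$. A homeomorphism $f$ is cw-expansive if there is $\delta>0$ such that $f^n(A)\in\mathcal C_\delta(X)$ for all $n\in\mathbb{Z}$ implies $A\in\mathcal C_0(X)$, i.e. $A$ is a singleton. *)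

(* Defs.v *)
From Stdlib Require Import Reals ZArith.
Open Scope R_scope.

Section MetricDefs.
Context {X : Type} (d : X -> X -> R).

Definition is_metric : Prop :=
  (forall x y, 0 <= d x y) /\
  (forall x y, d x y = 0 <-> x = y) /\
  (forall x y, d x y = d y x) /\
  (forall x y z, d x z <= d x y + d y z).

Definition seq_conv (u : nat -> X) (l : X) : Prop :=
  forall eps, 0 < eps -> exists N, forall n, (n >= N)%nat -> d (u n) l < eps.

(** compact subset (sequential compactness, equivalent in metric spaces) *)
Definition compact_set (K : X -> Prop) : Prop :=
  forall u : nat -> X, (forall n, K (u n)) ->
    exists (phi : nat -> nat) (l : X),
      (forall n, (phi n < phi (S n))%nat) /\ K l /\ seq_conv (fun n => u (phi n)) l.

Definition compact_space : Prop := compact_set (fun _ => True).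

Definition open_set (U : X -> Prop) : Prop :=
  forall x, U x -> exists r, 0 < r /\ forall y, d x y < r -> U y.

Definition connected_set (A : X -> Prop) : Prop :=
  ~ exists U V : X -> Prop, open_set U /\ open_set V /\
      (forall x, A x -> U x \/ V x) /\
      (exists x, A x /\ U x) /\ (exists x, A x /\ V x) /\
      (forall x, A x -> U x -> V x -> False).

Definition is_continuum (A : X -> Prop) : Prop :=
  (exists x, A x) /\ compact_set A /\ connected_set A.

Definition diam_le (A : X -> Prop) (delta : R) : Prop :=
  forall x y, A x -> A y -> d x y <= delta.

Definition in_C_delta (delta : R) (A : X -> Prop) : Prop :=
  is_continuum A /\ diam_le A delta.

Definition is_singleton (A : X -> Prop) : Prop :=
  exists x, forall y, A y <-> y = x.

Definition in_nbhd (A B : X -> Prop) (eps : R) : Prop :=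
  forall a, A a -> exists b, B b /\ d a b < eps.

(** Hausdorff distance d_H(A,B) = inf {eps > 0 | A ⊆ U_eps(B), B ⊆ U_eps(A)};
    hausdorff_lt A B eta  means  d_H(A,B) < eta. *)
Definition hausdorff_lt (A B : X -> Prop) (eta : R) : Prop :=
  exists eps, 0 < eps /\ eps < eta /\ in_nbhd A B eps /\ in_nbhd B A eps.

Definition continuous_on_C_delta (delta : R) (L : (X -> Prop) -> R) : Prop :=
  forall A, in_C_delta delta A ->
    forall eps, 0 < eps -> exists eta, 0 < eta /\
      forall B, in_C_delta delta B -> hausdorff_lt A B eta ->
        Rabs (L B - L A) < eps.

Definition continuous_map (f : X -> X) : Prop :=
  forall x eps, 0 < eps -> exists eta, 0 < eta /\
    forall y, d x y < eta -> d (f x) (f y) < eps.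

Definition is_homeomorphism (f g : X -> X) : Prop :=
  continuous_map f /\ continuous_map g /\
  (forall x, g (f x) = x) /\ (forall x, f (g x) = x).

End MetricDefs.

Definition image {X : Type} (h : X -> X) (A : X -> Prop) : X -> Prop :=
  fun y => exists x, A x /\ y = h x.

Fixpoint iter {X : Type} (n : nat) (h : X -> X) (x : X) : X :=
  match n with O => x | S k => h (iter k h x) end.

Definition zpow {X : Type} (f g : X -> X) (n : Z) : X -> X :=
  match n with
  | Z0 => fun x => x
  | Zpos p => iter (Pos.to_nat p) f
  | Zneg p => iter (Pos.to_nat p) g
  end.

Definition cw_expansive {X : Type} (d : X -> X -> R) (f g : X -> X) : Prop :=
  exists delta, 0 < delta /\
    forall A, is_continuum d A ->
      (forall n : Z, in_C_delta d delta (image (zpow f g n) A)) ->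
      is_singleton A.

(* Main.v *)
Require Import Defs.
From Stdlib Require Import Reals ZArith Lra Lia Classical ClassicalEpsilon FunctionalExtensionality PropExtensionality.
From Coquelicot Require Import Coquelicot.
Require Import Defs.
Open Scope R_scope.

Lemma ex_series_bound (a b : nat -> R) :
  (forall n, Rabs (a n) <= b n) -> ex_series b -> ex_series a.
Proof. intros H Hb. apply (ex_series_le a b); [intro n; exact (H n)| exact Hb]. Qed.

Section Sec.
Variable X : Type.
Variable d : X -> X -> R.
Hypothesis Hd : is_metric d.
Hypothesis Hcpt : compact_space d.

Lemma d_nonneg x y : 0 <= d x y. Proof. apply Hd. Qed.
Lemma d_refl x : d x x = 0. Proof. apply Hd. reflexivity. Qed.
Lemma d_sym x y : d x y = d y x. Proof. apply Hd. Qed.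
Lemma d_tri x y z : d x z <= d x y + d y z. Proof. apply Hd. Qed.

Lemma phi_ge_n (phi : nat -> nat) : (forall n, (phi n < phi (S n))%nat) -> forall n, (n <= phi n)%nat.
Proof. intros H n; induction n; [lia| specialize (H n); lia]. Qed.

Lemma UC (F : X -> X) : continuous_map d F -> forall e, 0 < e ->
  exists eta, 0 < eta /\ forall x y, d x y < eta -> d (F x) (F y) < e.
Proof.
  intros HF e He. apply NNPP; intro Hn.
  assert (H: forall n:nat, exists p : X*X, d (fst p) (snd p) < / INR (S n) /\ e <= d (F (fst p)) (F (snd p))).
  { intro n. apply NNPP; intro Hc. apply Hn. exists (/ INR (S n)). split.
    - apply Rinv_0_lt_compat, lt_0_INR; lia.
    - intros x y Hxy. apply Rnot_le_lt. intro Hle. apply Hc. exists (x,y). simpl; auto. }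
  set (u := fun n => proj1_sig (constructive_indefinite_description _ (H n))).
  assert (Hu : forall n, d (fst (u n)) (snd (u n)) < / INR (S n) /\ e <= d (F (fst (u n))) (F (snd (u n))))
    by (intro n; unfold u; destruct (constructive_indefinite_description _ (H n)); simpl; auto).
  destruct (Hcpt (fun n => fst (u n)) (fun _ => I)) as [phi [l [Hinc [_ Hconv]]]].
  destruct (HF l (e/2)) as [eta [Heta Hcont]]; [lra|].
  destruct (Hconv (eta/2)) as [N1 HN1]; [lra|].
  destruct (archimed_cor1 (eta/2)) as [N2 [HN2 HN2']]; [lra|].
  set (n := max N1 N2).
  specialize (HN1 n ltac:(unfold n; lia)).
  destruct (Hu (phi n)) as [Hu1 Hu2].
  assert (Hle: / INR (S (phi n)) <= / INR N2).
  { apply Rinv_le_contravar. apply lt_0_INR; lia. apply le_INR.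
    pose proof (phi_ge_n phi Hinc n). unfold n in *; lia. }
  set (x := fst (u (phi n))) in *. set (y := snd (u (phi n))) in *.
  assert (Hx : d l x < eta) by (rewrite d_sym; simpl in HN1; lra).
  assert (Hy : d l y < eta) by (pose proof (d_tri l x y); rewrite d_sym in HN1; simpl in HN1; lra).
  pose proof (Hcont x Hx). pose proof (Hcont y Hy).
  pose proof (d_tri (F x) (F l) (F y)). rewrite (d_sym (F x) (F l)) in H2. lra.
Qed.

Lemma iter_cont (F : X -> X) : continuous_map d F -> forall n, continuous_map d (iter n F).
Proof.
  intros HF n; induction n; intros x e He; simpl.
  - exists e; split; auto.
  - destruct (HF (iter n F x) e He) as [e1 [He1 H1]].
    destruct (IHn x e1 He1) as [e2 [He2 H2]].
    exists e2; split; auto.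
Qed.

Lemma image_continuum (F : X -> X) (A : X -> Prop) : continuous_map d F ->
  is_continuum d A -> is_continuum d (image F A).
Proof.
  intros HF [[x0 Hx0] [Hc Hconn]]. split; [|split].
  - exists (F x0), x0; auto.
  - intros u Hu.
    set (a := fun n => proj1_sig (constructive_indefinite_description _ (Hu n))).
    assert (Ha : forall n, A (a n) /\ u n = F (a n))
      by (intro n; unfold a; destruct (constructive_indefinite_description _ (Hu n)); simpl; auto).
    destruct (Hc a (fun n => proj1 (Ha n))) as [phi [l [Hinc [Al Hconv]]]].
    exists phi, (F l). split; [auto|split; [exists l; auto|]].
    intros eps Heps. destruct (HF l eps Heps) as [eta [Heta Hct]].
    destruct (Hconv eta Heta) as [N HN]. exists N. intros n Hn.
    rewrite (proj2 (Ha (phi n))), d_sym. apply Hct. rewrite d_sym. apply HN; auto.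
  - intros [U [V [oU [oV [cov [[x1 [[a1 [A1 e1]] U1]] [[x2 [[a2 [A2 e2]] V2]] disj]]]]]]].
    apply Hconn. exists (fun x => U (F x)), (fun x => V (F x)).
    assert (Hop : forall W, open_set d W -> open_set d (fun x => W (F x))).
    { intros W oW x Wx. destruct (oW _ Wx) as [r [Hr Hr']].
      destruct (HF x r Hr) as [eta [Heta Hct]]. exists eta; split; auto. }
    split; [apply Hop; auto|split; [apply Hop; auto|split; [|split; [|split]]]].
    + intros x Ax. apply cov. exists x; auto.
    + exists a1; subst; auto.
    + exists a2; subst; auto.
    + intros x Ax. apply disj. exists x; auto.
Qed.

Lemma iter_comm (F : X -> X) n x : iter n F (F x) = F (iter n F x).
Proof. induction n; simpl; congruence. Qed.

Lemma set_ext (A B : X -> Prop) : (forall y, A y <-> B y) -> A = B.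
Proof. intro H; apply functional_extensionality; intro y; apply propositional_extensionality; auto. Qed.

Lemma image_iter0 (F : X -> X) A : image (iter 0 F) A = A.
Proof. apply set_ext; intro y; split; [intros [x [Ax ->]]; exact Ax| intro Ay; exists y; auto]. Qed.

Lemma image_iterS (F : X -> X) k A : image (iter (S k) F) A = image (iter k F) (image F A).
Proof.
  apply set_ext; intro y; split.
  - intros [x [Ax ->]]. exists (F x); split; [exists x; auto| simpl; symmetry; apply iter_comm].
  - intros [z [[x [Ax ->]] ->]]. exists x; split; auto. simpl; apply iter_comm.
Qed.

Lemma image_inv (F G : X -> X) A : (forall x, G (F x) = x) -> image G (image F A) = A.
Proof.
  intro H. apply set_ext; intro y; split.
  - intros [z [[x [Ax ->]] ->]]. rewrite H; auto.
  - intro Ay. exists (F y); split; [exists y; auto| rewrite H; auto].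
Qed.

End Sec.

Section Sec2.
Variable X : Type.
Variable d : X -> X -> R.
Hypothesis Hd : is_metric d.
Variable del : R.
Hypothesis Hdel : 0 < del.

Definition phi t := Rmin 1 (Rmax 0 (t - del)).

Lemma phi_bounds t : 0 <= phi t <= 1.
Proof. unfold phi, Rmin, Rmax; repeat destruct Rle_dec; lra. Qed.
Lemma phi_lip s t c : 0 <= c -> s <= t + c -> phi s <= phi t + c.
Proof. intros; unfold phi, Rmin, Rmax; repeat destruct Rle_dec; lra. Qed.
Lemma phi_zero t : t <= del -> phi t = 0.
Proof. intros; unfold phi, Rmin, Rmax; repeat destruct Rle_dec; lra. Qed.
Lemma phi_pos t : phi t <= 0 -> t <= del.
Proof. intros; unfold phi, Rmin, Rmax in *; repeat destruct Rle_dec; lra. Qed.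

Definition EE (B : X -> Prop) (t : R) : Prop :=
  t = 0 \/ exists x y, B x /\ B y /\ t = phi (d x y).

Lemma EE_bound B : bound (EE B).
Proof. exists 1. intros t [->|[x [y [_ [_ ->]]]]]; [lra| apply phi_bounds]. Qed.
Lemma EE_ne B : exists t, EE B t.
Proof. exists 0; left; auto. Qed.

Definition h (B : X -> Prop) : R := proj1_sig (completeness (EE B) (EE_bound B) (EE_ne B)).
Lemma h_spec B : is_lub (EE B) (h B).
Proof. unfold h; destruct completeness; simpl; auto. Qed.

Lemma h_ge B x y : B x -> B y -> phi (d x y) <= h B.
Proof. intros; apply (proj1 (h_spec B)); right; exists x, y; auto. Qed.
Lemma h_nonneg B : 0 <= h B.
Proof. apply (proj1 (h_spec B)); left; auto. Qed.
Lemma h_le B c : 0 <= c -> (forall x y, B x -> B y -> phi (d x y) <= c) -> h B <= c.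
Proof. intros Hc H. apply (proj2 (h_spec B)). intros t [->|[x [y [Bx [By ->]]]]]; auto. Qed.
Lemma h_le1 B : h B <= 1.
Proof. apply h_le; [lra| intros; apply phi_bounds]. Qed.

Lemma h_haus B B' e : 0 <= e -> in_nbhd d B B' e -> in_nbhd d B' B e -> h B <= h B' + 2 * e.
Proof.
  intros He H1 H2. apply h_le. pose proof (h_nonneg B'); lra.
  intros x y Bx By. destruct (H1 x Bx) as [x' [Bx' Hx]]. destruct (H1 y By) as [y' [By' Hy]].
  pose proof (h_ge B' x' y' Bx' By') as T0.
  assert (H3 : d x y <= d x' y' + 2 * e).
  { pose proof (d_tri X d Hd x x' y) as T1. pose proof (d_tri X d Hd x' y' y) as T2.
    rewrite (d_sym X d Hd y' y) in T2. lra. }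
  pose proof (phi_lip (d x y) (d x' y') (2*e) ltac:(lra) H3) as T3. lra.
Qed.

Lemma h_diam B : diam_le d B del -> h B = 0.
Proof.
  intro H. apply Rle_antisym; [|apply h_nonneg]. apply h_le; [lra|].
  intros x y Bx By. rewrite phi_zero; [lra| apply H; auto].
Qed.

Lemma h_zero_diam B : h B = 0 -> diam_le d B del.
Proof. intros H x y Bx By. apply phi_pos. rewrite <- H. apply h_ge; auto. Qed.

End Sec2.

Definition r := (3 - sqrt 5) / 2.
Lemma r_facts : 0 < r /\ 2 * r < 1 /\ r * (3 - r) = 1.
Proof.
  assert (H5 : sqrt 5 * sqrt 5 = 5) by (apply sqrt_sqrt; lra).
  pose proof (sqrt_pos 5).
  assert (2 < sqrt 5) by nra. assert (sqrt 5 < 3) by nra.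
  unfold r; repeat split; nra.
Qed.

Lemma Series_zero : Series (fun _ : nat => 0) = 0.
Proof.
  transitivity (Series (fun n : nat => 0 * 0)); [apply Series_ext; intro; ring|].
  rewrite (Series_scal_l 0 (fun _ => 0)); ring.
Qed.

Lemma min_eta (P : nat -> R -> Prop) :
  (forall n a b, 0 < a <= b -> P n b -> P n a) ->
  (forall n, exists a, 0 < a /\ P n a) ->
  forall N, exists a, 0 < a /\ forall n, (n < N)%nat -> P n a.
Proof.
  intros Hm He N; induction N.
  - exists 1; split; [lra| intros; lia].
  - destruct IHN as [a [Ha Ha']]. destruct (He N) as [b [Hb Hb']].
    exists (Rmin a b); split; [apply Rmin_pos; auto|].
    intros n Hn. destruct (Nat.eq_dec n N) as [->|Hne].
    + apply (Hm N _ b); auto. split; [apply Rmin_pos; auto| apply Rmin_r].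
    + apply (Hm n _ a); [split; [apply Rmin_pos; auto| apply Rmin_l]| apply Ha'; lia].
Qed.

Section Sec3.
Variable X : Type.
Variable d : X -> X -> R.
Hypothesis Hd : is_metric d.
Variable del : R.
Hypothesis Hdel : 0 < del.

Notation hh := (h X d del).

Definition S (F : X -> X) (A : X -> Prop) : R :=
  Series (fun n => r ^ n * hh (image (iter n F) A)).

Lemma r_pos : 0 < r. Proof. apply r_facts. Qed.
Lemma r_lt : 2 * r < 1. Proof. apply r_facts. Qed.

Lemma term_bounds (B : X -> Prop) n : 0 <= r ^ n * hh B <= r ^ n.
Proof.
  pose proof (h_nonneg X d del B). pose proof (h_le1 X d del B).
  pose proof (pow_le r n (Rlt_le _ _ r_pos)). split; nra.
Qed.

Lemma ex_S F A : ex_series (fun n => r ^ n * hh (image (iter n F) A)).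
Proof.
  apply (ex_series_bound _ (fun n => r ^ n)).
  - intro n. destruct (term_bounds (image (iter n F) A) n). rewrite Rabs_pos_eq; lra.
  - apply ex_series_geom. pose proof r_pos; pose proof r_lt. rewrite Rabs_pos_eq; lra.
Qed.

Lemma S_nonneg F A : 0 <= S F A.
Proof.
  rewrite <- Series_zero. unfold S. apply Series_le; [|apply ex_S].
  intro n; destruct (term_bounds (image (iter n F) A) n); lra.
Qed.

Lemma S_shift F A : S F A = hh A + r * S F (image F A).
Proof.
  unfold S. rewrite Series_incr_1 by apply ex_S. cbv beta. rewrite image_iter0.
  rewrite <- Series_scal_l. f_equal; [simpl; ring|]. apply Series_ext. intro n.
  rewrite image_iterS. simpl pow. ring.
Qed.

Lemma S_zero_terms F : forall k A, S F A = 0 -> hh (image (iter k F) A) = 0.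
Proof.
  pose proof r_pos.
  intro k; induction k; intros A HS; rewrite S_shift in HS;
    pose proof (h_nonneg X d del A); pose proof (S_nonneg F (image F A)).
  - rewrite image_iter0. nra.
  - rewrite image_iterS. apply IHk. nra.
Qed.

Lemma S_singleton F A : is_singleton A -> S F A = 0.
Proof.
  intros [x Hx]. unfold S. rewrite <- Series_zero. apply Series_ext. intro n.
  rewrite (h_diam X d del); [ring|].
  intros y z [y0 [Hy0 ->]] [z0 [Hz0 ->]]. apply Hx in Hy0, Hz0. subst.
  rewrite (d_refl X d Hd). lra.
Qed.

Lemma nbhd_image (G : X -> X) A B a e c : (forall x y, d x y < a -> d (G x) (G y) < e) ->
  c < a -> in_nbhd d A B c -> in_nbhd d (image G A) (image G B) e.
Proof.
  intros HG Hc H y [x [Ax ->]]. destruct (H x Ax) as [b [Bb Hb]].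
  exists (G b); split; [exists b; auto| apply HG; lra].
Qed.

Lemma S_cont F
  (UCi : forall n e, 0 < e -> exists eta, 0 < eta /\ forall x y, d x y < eta -> d (iter n F x) (iter n F y) < e)
  A eps : 0 < eps -> exists eta, 0 < eta /\ forall B, hausdorff_lt d A B eta -> Rabs (S F B - S F A) < eps.
Proof.
  intro Heps. pose proof r_pos as Hr. pose proof r_lt as Hr2.
  destruct (pow_lt_1_zero (2 * r) ltac:(rewrite Rabs_pos_eq; lra) (eps/8) ltac:(lra)) as [N HN].
  specialize (HN N (le_n N)). rewrite Rabs_pos_eq in HN by (apply pow_le; lra).
  set (e1 := eps / 16).
  destruct (min_eta (fun n a => forall x y, d x y < a -> d (iter n F x) (iter n F y) < e1 / 2))
     with (N := N) as [eta [Heta Heta']].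
  { intros n a b Hab Hb x y Hxy. apply Hb. lra. }
  { intro n. apply UCi. unfold e1; lra. }
  exists eta; split; auto.
  intros B [c [Hc [Hce [H1 H2]]]].
  set (K := e1 + (2 * r) ^ N).
  set (ta := fun n => r ^ n * hh (image (iter n F) B)).
  set (tb := fun n => r ^ n * hh (image (iter n F) A)).
  assert (Hbnd : forall n, Rabs (ta n - tb n) <= K * (/2) ^ n).
  { intro n. unfold ta, tb.
    replace (r ^ n * hh (image (iter n F) B) - r ^ n * hh (image (iter n F) A))
      with (r ^ n * (hh (image (iter n F) B) - hh (image (iter n F) A))) by ring.
    rewrite Rabs_mult, (Rabs_pos_eq (r ^ n)) by (apply pow_le; lra).
    assert (Hrn : r ^ n <= (/2) ^ n) by (apply pow_incr; lra).
    assert (HrN : 0 <= (2 * r) ^ N) by (apply pow_le; lra).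
    assert (H2n : 0 <= (/2) ^ n) by (apply pow_le; lra).
    destruct (lt_dec n N) as [HnN|HnN].
    - assert (Hd1 : Rabs (hh (image (iter n F) B) - hh (image (iter n F) A)) <= e1).
      { pose proof (Heta' n HnN) as HU.
        pose proof (nbhd_image (iter n F) A B eta (e1/2) c HU Hce H1).
        pose proof (nbhd_image (iter n F) B A eta (e1/2) c HU Hce H2).
        pose proof (h_haus X d Hd del (image (iter n F) A) (image (iter n F) B) (e1/2) ltac:(unfold e1; lra) H H0).
        pose proof (h_haus X d Hd del (image (iter n F) B) (image (iter n F) A) (e1/2) ltac:(unfold e1; lra) H0 H).
        apply Rabs_le; lra. }
      pose proof (Rabs_pos (hh (image (iter n F) B) - hh (image (iter n F) A))).
      unfold K. pose proof (pow_le r n (Rlt_le _ _ Hr)). nra.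
    - assert (Hd1 : Rabs (hh (image (iter n F) B) - hh (image (iter n F) A)) <= 1).
      { pose proof (h_nonneg X d del (image (iter n F) B)). pose proof (h_le1 X d del (image (iter n F) B)).
        pose proof (h_nonneg X d del (image (iter n F) A)). pose proof (h_le1 X d del (image (iter n F) A)).
        apply Rabs_le; lra. }
      assert (Hrn' : r ^ n <= (2 * r) ^ N * (/2) ^ n).
      { replace r with ((2 * r) * /2) at 1 by field. rewrite Rpow_mult_distr.
        apply Rmult_le_compat_r; auto.
        replace n with (N + (n - N))%nat by lia. rewrite pow_add.
        assert ((2 * r) ^ (n - N) <= 1).
        { rewrite <- (pow1 (n - N)). apply pow_incr; lra. }
        nra. }
      pose proof (Rabs_pos (hh (image (iter n F) B) - hh (image (iter n F) A))).
      unfold K. assert (0 <= e1) by (unfold e1; lra).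
      pose proof (pow_le r n (Rlt_le _ _ Hr)). nra. }
  assert (Hgeo : ex_series (fun n => K * (/2) ^ n)).
  { apply (ex_series_scal_l K (fun n => (/2)^n)). apply ex_series_geom. rewrite Rabs_pos_eq; lra. }
  assert (Hgs : Series (fun n => K * (/2) ^ n) = K * 2).
  { rewrite Series_scal_l. f_equal. rewrite (is_series_unique _ (/ (1 - /2))).
    field. apply is_series_geom. rewrite Rabs_pos_eq; lra. }
  unfold S. fold ta. fold tb.
  rewrite <- Series_minus by (apply ex_S).
  assert (Hex : ex_series (fun n => Rabs (ta n - tb n))).
  { apply (ex_series_bound _ _ (fun n => ltac:(rewrite Rabs_Rabsolu; apply Hbnd)) Hgeo). }
  eapply Rle_lt_trans; [apply Series_Rabs, Hex|].
  eapply Rle_lt_trans; [apply (Series_le _ _ (fun n => conj (Rabs_pos _) (Hbnd n)) Hgeo)|].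
  rewrite Hgs. unfold K, e1. lra.
Qed.

End Sec3.

Lemma inv_rel x y : x = r * y -> y = (3 - r) * x.
Proof. intro H. destruct r_facts as [_ [_ H3]]. rewrite H. replace ((3 - r) * (r * y)) with ((r * (3 - r)) * y) by ring. rewrite H3; ring. Qed.

Theorem mainTheorem18 (X : Type) (d : X -> X -> R) (f g : X -> X)
  (Hd : is_metric d) (Hcpt : compact_space d)
  (Hhomeo : is_homeomorphism d f g) (Hcw : cw_expansive d f g) :
  exists delta : R, 0 < delta /\
  exists L : (X -> Prop) -> R,
    continuous_on_C_delta d delta L /\
    (forall A, in_C_delta d delta A ->
       0 <= L A /\ (L A = 0 <-> is_singleton A)) /\
    (forall A, in_C_delta d delta (image f A) -> in_C_delta d delta A ->
       in_C_delta d delta (image g A) ->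
       L (image f A) - 2 * L A + L (image g A) = L A).
Proof.
  destruct Hhomeo as [Hf [Hg [Hgf Hfg]]].
  destruct Hcw as [del [Hdel Hcw]].
  exists del; split; auto.
  exists (fun A => S X d del f A + S X d del g A).
  assert (UCi : forall F, continuous_map d F -> forall n e, 0 < e -> exists eta, 0 < eta /\
            forall x y, d x y < eta -> d (iter n F x) (iter n F y) < e).
  { intros F HF n e He. apply (UC X d Hd Hcpt); auto. apply iter_cont; auto. }
  split; [|split].
  - intros A _ eps Heps.
    destruct (S_cont X d Hd del f (UCi f Hf) A (eps/2)) as [e1 [He1 H1]]; [lra|].
    destruct (S_cont X d Hd del g (UCi g Hg) A (eps/2)) as [e2 [He2 H2]]; [lra|].
    exists (Rmin e1 e2); split; [apply Rmin_pos; auto|].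
    intros B _ [c [Hc [Hce [N1 N2]]]].
    assert (hausdorff_lt d A B e1) by (exists c; repeat split; auto; pose proof (Rmin_l e1 e2); lra).
    assert (hausdorff_lt d A B e2) by (exists c; repeat split; auto; pose proof (Rmin_r e1 e2); lra).
    specialize (H1 B H). specialize (H2 B H0).
    replace (S X d del f B + S X d del g B - (S X d del f A + S X d del g A))
      with ((S X d del f B - S X d del f A) + (S X d del g B - S X d del g A)) by ring.
    eapply Rle_lt_trans; [apply Rabs_triang|]. lra.
  - intros A [HA _].
    pose proof (S_nonneg X d del f A). pose proof (S_nonneg X d del g A).
    split; [lra|split].
    + intro HL0. assert (Hf0 : S X d del f A = 0) by lra. assert (Hg0 : S X d del g A = 0) by lra.
      apply Hcw; auto. intro n.
      assert (Hgen : forall F k, continuous_map d F -> S X d del F A = 0 ->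
                in_C_delta d del (image (iter k F) A)).
      { intros F k HF HS. split.
        - apply image_continuum; auto. apply iter_cont; auto.
        - apply (h_zero_diam X d del). apply (S_zero_terms X d del F k A HS). }
      destruct n as [|p|p]; simpl.
      * exact (Hgen f 0%nat Hf Hf0).
      * exact (Hgen f (Pos.to_nat p) Hf Hf0).
      * exact (Hgen g (Pos.to_nat p) Hg Hg0).
    + intro Hs. rewrite (S_singleton X d Hd del Hdel f A Hs), (S_singleton X d Hd del Hdel g A Hs). ring.
  - intros A HfA HA HgA.
    assert (h0 : forall B, in_C_delta d del B -> h X d del B = 0)
      by (intros B [_ HB]; apply h_diam; auto).
    pose proof (S_shift X d del f A) as E1. rewrite (h0 A HA) in E1.
    pose proof (S_shift X d del g A) as E2. rewrite (h0 A HA) in E2.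
    pose proof (S_shift X d del g (image f A)) as E3. rewrite (h0 _ HfA), image_inv in E3 by auto.
    pose proof (S_shift X d del f (image g A)) as E4. rewrite (h0 _ HgA), image_inv in E4 by auto.
    rewrite Rplus_0_l in E1, E2, E3, E4.
    apply inv_rel in E1. apply inv_rel in E2.
    rewrite E1, E2, E3, E4. ring.
Qed.
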